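(* Let $r\geq 3$ and let $D$ be an $m$-colored semicomplete $r$-partite digraph such that every $\overrightarrow{C}_3$ and every $\overrightarrow{C}_4$ contained in $D$ is monochromatic. Then $D$ has a $2$-colored kernel.
   Context: A semicomplete $r$-partite digraph ($r\ge 2$) is a digraph whose vertex set is partitioned into $r$ nonempty independent sets (partite sets) such that for any two vertices $u,v$ in different partite sets at least one of the arcs $(u,v)$, $(v,u)$ is present (both may be present); there are no arcs inside a partite set. An $m$-colored digraph is a digraph whose arcs are each assigned one of $m$ colors. A directed path (no repeated vertices) is $j$-colored if its arcs use exactly $j$ distinct colors. ''Contained in $D$'' means being a subdigraph of $D$; a subdigraph is monochromatic if all its arcs have the same color. $\overrightarrow{C}_n$ is the directed cycle of length $n$. A $k$-colored kernel of $D$ is a nonempty set $K\subseteq V(D)$ such that (a) for every $u\in V(D)\setminus K$ there exist $v\in K$ and a $j$-colored directed path from $u$ to $v$ with $1\le j\le k$, and (b) for all distinct $u,v\in K$ there is no $j$-colored directed path from $u$ to $v$ with $1\le j\le k$. *)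

(* Defs.v *)
From mathcomp Require Import all_boot.
Set Implicit Arguments. Unset Strict Implicit. Unset Printing Implicit Defensive.

Section Digraphs.
Variables (V : finType) (arc : rel V).

Definition semicomplete_multipartite (r : nat) (part : V -> 'I_r) : Prop :=
  [/\ forall i : 'I_r, exists v, part v = i,
      forall u v, arc u v -> part u != part v
    & forall u v, part u != part v -> arc u v || arc v u].

Variables (C : eqType) (color : V -> V -> C).

Definition path_colors (x : V) (p : seq V) : seq C := pairmap color x p.

Definition ncolors (x : V) (p : seq V) : nat := size (undup (path_colors x p)).

Definition colored_path_le (k : nat) (x y : V) (p : seq V) : bool :=
  [&& path arc x p, uniq (x :: p), last x p == y,
      0 < ncolors x p & ncolors x p <= k].

Definition has_colored_path_le (k : nat) (x y : V) : Prop :=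
  exists p : seq V, colored_path_le k x y p.

Definition colored_kernel (k : nat) (K : {set V}) : Prop :=
  [/\ K != set0,
      forall u, u \notin K -> exists2 v, v \in K & has_colored_path_le k u v
    & forall u v, u \in K -> v \in K -> u != v -> ~ has_colored_path_le k u v].

Definition C3_monochromatic : Prop :=
  forall a b c : V, uniq [:: a; b; c] ->
    arc a b -> arc b c -> arc c a ->
    color a b = color b c /\ color b c = color c a.

Definition C4_monochromatic : Prop :=
  forall a b c d : V, uniq [:: a; b; c; d] ->
    arc a b -> arc b c -> arc c d -> arc d a ->
    [/\ color a b = color b c, color b c = color c d & color c d = color d a].

End Digraphs.

(* Main.v *)
From Stdlib Require Import Classical.
Require Import Defs.
From mathcomp Require Import all_boot.
From mathcomp Require Import zify.

Set Implicit Arguments. Unset Strict Implicit. Unset Printing Implicit Defensive.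

Section Proof.
Variables (V : finType) (arc : rel V) (r : nat) (part : V -> 'I_r).
Variables (C : eqType) (color : V -> V -> C).
Hypothesis Hno : forall u v, arc u v -> part u != part v.
Hypothesis Hsc : forall u v, part u != part v -> arc u v || arc v u.
Hypothesis HC3 : C3_monochromatic arc color.
Hypothesis HC4 : C4_monochromatic arc color.

Lemma last_take' (u : V) p i : i <= size p -> last u (take i p) = nth u (u :: p) i.
Proof.
elim: p u i => [|x p IH] u [|i] //= Hi.
rewrite IH //; apply: set_nth_default; by rewrite /= ltnS.
Qed.

Lemma shortcut (u : V) p i j : i < j -> j < size p ->
  arc (nth u (u :: p) i) (nth u p j) -> path arc u p -> uniq (u :: p) ->
  [/\ path arc u (take i p ++ drop j p), uniq (u :: (take i p ++ drop j p)),
      last u (take i p ++ drop j p) = last u p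
    & size (take i p ++ drop j p) < size p].
Proof.
move=> Hij Hj Ha Hp Hu.
have Hi : i <= size p by lia.
split.
- rewrite cat_path; apply/andP; split.
    by move: Hp; rewrite -{1}(cat_take_drop i p) cat_path => /andP[].
  rewrite last_take' // (drop_nth u) //=; rewrite Ha /=.
  move: Hp; rewrite -{1}(cat_take_drop j.+1 p) cat_path => /andP[_].
  by rewrite last_take'.
- apply: subseq_uniq Hu => /=; rewrite eqxx.
  rewrite -[X in subseq _ X](cat_take_drop i p); apply: cat_subseq (subseq_refl _) _.
  rewrite -(subnK (ltnW Hij)) -drop_drop; exact: drop_subseq.
- rewrite -[in RHS](cat_take_drop j.+1 p) !last_cat (drop_nth u Hj) //=.
  by rewrite (last_take' u (_ : j.+1 <= size p)).
- rewrite size_cat size_take size_drop; case: ifP; lia.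
Qed.

Lemma direct (u : V) p : path arc u p -> uniq (u :: p) -> u != last u p ->
  (forall i j, i < j -> j < size p -> j <= i.+2 ->
     ~~ arc (nth u (u :: p) i) (nth u p j)) ->
  colored_path_le arc color 2 u (last u p) p.
Proof.
move=> Hp Hu Hne Hch.
have Hk : 0 < size p by case: p Hp Hu Hne {Hch} => //=; rewrite eqxx.
rewrite /colored_path_le Hp Hu eqxx /=.
set s := path_colors color u p.
have Hs : size s = size p by rewrite /s /path_colors size_pairmap.
have Hpos : 0 < ncolors color u p.
  rewrite /ncolors -/s.
  have : nth (color u u) s 0 \in undup s by rewrite mem_undup mem_nth // Hs.
  by case: (undup s).
rewrite Hpos /=.
case: (leqP (size p) 2) => Hk2.
  by rewrite /ncolors -/s (leq_trans (size_undup _)) // Hs.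
pose a i := nth u (u :: p) i.
pose c i := color (a i) (a i.+1).
have Harc : forall i, i < size p -> arc (a i) (a i.+1).
  by move=> i Hi; move/(pathP u): Hp; apply.
have HD : forall i j, i <= size p -> j <= size p -> (a i == a j) = (i == j).
  by move=> i j Hi Hj; rewrite /a nth_uniq.
have Hch2 : forall i, i.+1 < size p -> ~~ arc (a i) (a i.+2).
  move=> i Hi; exact: (Hch i i.+1).
have Hch3 : forall i, i.+2 < size p -> ~~ arc (a i) (a i.+3).
  move=> i Hi; exact: (Hch i i.+2).
have Hstep : forall i, i.+1 < size p -> c i = c i.+1.
  move=> i Hi.
  case Hpp: (part (a i) == part (a i.+2)).
  - case: (ltnP i.+2 (size p)) => Hi2.
    + have Hn : part (a i) != part (a i.+3).
        by rewrite (eqP Hpp); apply: Hno; apply: Harc.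
      have := Hsc Hn; rewrite (negbTE (Hch3 i Hi2)) /= => Hb.
      have Hq : uniq [:: a i; a i.+1; a i.+2; a i.+3].
        by rewrite /= !inE !HD; lia.
      by case: (HC4 Hq (Harc i _) (Harc i.+1 Hi) (Harc i.+2 Hi2) Hb) => //; lia.
    + case: i Hi Hpp Hi2 => [|i] Hi Hpp Hi2; first lia.
      have Hn : part (a i) != part (a i.+3).
        by rewrite -(eqP Hpp); apply: Hno; apply: Harc; lia.
      have Hi2' : i.+2 < size p by lia.
      have := Hsc Hn; rewrite (negbTE (Hch3 i Hi2')) /= => Hb.
      have Hq : uniq [:: a i; a i.+1; a i.+2; a i.+3].
        by rewrite /= !inE !HD; lia.
      by case: (HC4 Hq (Harc i _) (Harc i.+1 _) (Harc i.+2 _) Hb) => //; lia.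
  - have Hn : part (a i) != part (a i.+2) by rewrite Hpp.
    have := Hsc Hn; rewrite (negbTE (Hch2 i Hi)) /= => Hb.
    have Hq : uniq [:: a i; a i.+1; a i.+2].
      by rewrite /= !inE !HD; lia.
    by case: (HC3 Hq (Harc i _) (Harc i.+1 Hi) Hb) => //; lia.
have Hall : forall i, i < size p -> c i = c 0.
  elim=> [//|i IH] Hi; rewrite -Hstep //; apply: IH; lia.
have Hsub : {subset undup s <= [:: c 0]}.
  move=> y; rewrite mem_undup => /(nthP (color u u)) [i Hi <-].
  rewrite Hs in Hi.
  rewrite /s /path_colors (nth_pairmap u) // inE; apply/eqP; exact: (Hall i Hi).
rewrite /ncolors -/s.
exact: leq_trans (uniq_leq_size (undup_uniq s) Hsub) _.
Qed.

Lemma core n (u : V) p : size p <= n -> path arc u p -> uniq (u :: p) ->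
  u != last u p -> has_colored_path_le arc color 2 u (last u p).
Proof.
elim: n p => [|n IH] p Hs Hp Hu Hne.
  by case: p Hs Hp Hu Hne => //= _ _ _; rewrite eqxx.
case: (classic (exists i j, [/\ i < j, j < size p, j <= i.+2 &
   arc (nth u (u :: p) i) (nth u p j)])) => [[i [j [Hij Hj _ Ha]]] | Hn].
  case: (shortcut Hij Hj Ha Hp Hu) => Hp' Hu' Hl Hsz.
  rewrite -Hl; apply: IH => //; [lia | by rewrite Hl].
exists p; apply: direct => // i j Hij Hj Hj2; apply/negP => Ha.
by apply: Hn; exists i, j.
Qed.

Lemma colored_iff (u v : V) :
  has_colored_path_le arc color 2 u v <-> u != v /\ connect arc u v.
Proof.
split.
- case=> p /and5P[Hp Hu /eqP Hl Hpos _]; split.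
    apply/negP => /eqP Huv; rewrite -Huv in Hl.
    case: p Hp Hu Hl Hpos => [|x p] //= Hp Hu Hl Hpos.
    have : last x p \in x :: p by apply: mem_last.
    rewrite Hl => Hin; move: Hu => /andP[/negP Hnu _]; exact: Hnu.
  by apply/connectP; exists p.
- case=> Hne /connectP [p Hp Hl]; subst v.
  case: (shortenP Hp) Hne => p' Hp' Hu' _ Hne.
  exact: (@core (size p') u p' (leqnn _) Hp' Hu' Hne).
Qed.

Definition terminal (v : V) := [forall w, connect arc v w ==> connect arc w v].

Lemma terminal_exists (u : V) : exists2 w, connect arc u w & terminal w.
Proof.
pose F w := #|[set z | connect arc w z]|.
case: (@arg_minnP _ u (fun w => connect arc u w) F (connect0 _ _)) => w Huw Hmin.
exists w => //; apply/forallP => z; apply/implyP => Hwz.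
have Hsub : [set y | connect arc z y] \subset [set y | connect arc w y].
  apply/subsetP => y; rewrite !inE; exact: connect_trans.
have Hle := Hmin z (connect_trans Huw Hwz).
have := subset_leqif_card Hsub; case => _ Heq.
have : [set y | connect arc w y] \subset [set y | connect arc z y].
  by rewrite -Heq eqn_leq Hle (subset_leq_card Hsub).
by move/subsetP => /(_ w); rewrite !inE connect0 => /(_ isT).
Qed.

Definition Kset : {set V} := [set v | terminal v &&
   [forall w, connect arc v w ==> (enum_rank v <= enum_rank w)]].

Lemma K_absorb (u : V) : exists2 v, v \in Kset & connect arc u v.
Proof.
case: (terminal_exists u) => w0 Huw0 Hw0.
case: (@arg_minnP _ w0 (fun v => connect arc u v && terminal v)
        (fun v => nat_of_ord (enum_rank v))); first by rewrite Huw0.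
move=> v /andP[Huv Htv] Hmin; exists v => //.
rewrite inE Htv /=; apply/forallP => w; apply/implyP => Hvw.
apply: Hmin; rewrite (connect_trans Huv Hvw) /=.
apply/forallP => z; apply/implyP => Hwz.
have Hzv : connect arc z v.
  by move/forallP: Htv => /(_ z) /implyP; apply; apply: connect_trans Hwz.
exact: connect_trans Hzv Hvw.
Qed.

End Proof.

Theorem mainTheorem8 (V : finType) (arc : rel V) (r : nat) (part : V -> 'I_r)
  (m : nat) (color : V -> V -> 'I_m) :
  3 <= r ->
  semicomplete_multipartite arc part ->
  C3_monochromatic arc color ->
  C4_monochromatic arc color ->
  exists K : {set V}, colored_kernel arc color 2 K.
Proof.
move=> Hr [Hsurj Hno Hsc] HC3 HC4.
exists (Kset arc); split.
- have Hr0 : 0 < r by lia.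
  case: (Hsurj (Ordinal Hr0)) => v0 _.
  case: (K_absorb arc v0) => v Hv _.
  by apply/set0Pn; exists v.
- move=> u Hu; case: (K_absorb arc u) => v Hv Huv; exists v => //.
  apply/(colored_iff Hno Hsc HC3 HC4); split => //.
  by apply/negP => /eqP Heq; move: Hu; rewrite Heq Hv.
- move=> u v Hu Hv Hne /(colored_iff Hno Hsc HC3 HC4) [_ Huv].
  move: Hu Hv; rewrite !inE => /andP[Htu /forallP Hmu] /andP[_ /forallP Hmv].
  have Hvu : connect arc v u by move/forallP: Htu => /(_ v) /implyP; apply.
  have := Hmu v; rewrite Huv /= => H1.
  have := Hmv u; rewrite Hvu /= => H2.
  have : enum_rank u = enum_rank v by apply: val_inj => /=; lia.
  by move/enum_rank_inj => E; rewrite E eqxx in Hne.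
Qed.
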